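(* Let $\Bbbk$ be a field. Let $A'$ be a standard graded artinian $\Bbbk$-algebra failing the WLP, and let $A''$ be a standard graded artinian $\Bbbk$-algebra whose Hilbert series has at least one isolated peak. Then $A = A' \otimes_\Bbbk A''$ fails the WLP. Specifically, if $A'$ fails the WLP in degree $i$ and the Hilbert series of $A''$ has an isolated peak in degree $j$, then $A$ fails the WLP in degree $i+j$.
   Context: A standard graded artinian algebra $A=\bigoplus_i A_i$ has the WLP if there is a linear form $\ell$ such that $\times\ell:A_k\to A_{k+1}$ has maximal rank (is injective or surjective) for every $k$. $A$ fails the WLP in degree $i$ if for a general linear form $\ell$ the map $\times \ell: A_i\to A_{i+1}$ does not have maximal rank. The Hilbert function is $\mathrm{HF}(A,k)=\dim_\Bbbk A_k$; the Hilbert series has an isolated peak in degree $j\ge 1$ if $\mathrm{HF}(A,j-1)<\mathrm{HF}(A,j)>\mathrm{HF}(A,j+1)$. *)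

(* Defs.v *)
From HB Require Import structures.
From mathcomp Require Import all_boot all_order all_algebra.
From mathcomp Require Import mpoly.
Set Implicit Arguments. Unset Strict Implicit. Unset Printing Implicit Defensive.
Import Order.TTheory GRing.Theory.
Local Open Scope ring_scope.

(* A standard graded artinian K-algebra is presented as A = K[x_1..x_n]/I,
   with I a proper homogeneous ideal (given as a Prop-predicate) such that
   A_d = 0 for d large. *)

Section Defs.
Variables (K : fieldType) (n : nat).
Implicit Types (I : {mpoly K[n]} -> Prop) (p f g l : {mpoly K[n]}).

Definition is_ideal I :=
  [/\ I 0, (forall p q, I p -> I q -> I (p + q)) & (forall r p, I p -> I (r * p))].

Definition is_homog_ideal I :=
  is_ideal I /\ (forall p d, I p -> I (pihomog mdeg d p)).

Definition std_graded_artinian I :=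
  [/\ is_homog_ideal I, ~ I 1 &
      exists N : nat, forall (d : nat) p, (N <= d)%N -> p \is d.-homog -> I p].

(* x l : A_i -> A_{i+1} injective / surjective *)
Definition mul_injective I l (i : nat) :=
  forall f, f \is i.-homog -> I (l * f) -> I f.
Definition mul_surjective I l (i : nat) :=
  forall g, g \is i.+1.-homog -> exists2 f, f \is i.-homog & I (g - l * f).
Definition mul_max_rank I l (i : nat) :=
  mul_injective I l i \/ mul_surjective I l i.

(* A = K[x]/I fails the WLP in degree i: no linear form (so in particular a
   general one does not) gives a map A_i -> A_{i+1} of maximal rank. *)
Definition fails_WLP_in_degree I (i : nat) :=
  forall l, l \is 1.-homog -> ~ mul_max_rank I l i.

Definition has_WLP I :=
  exists2 l, l \is 1.-homog & forall i, mul_max_rank I l i.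

(* HF(K[x]/I, k) = h : there is a basis of A_k = R_k / I_k of size h *)
Definition HF_is I (k h : nat) :=
  exists s : h.-tuple {mpoly K[n]},
    [/\ forall t, tnth s t \is k.-homog,
        forall f, f \is k.-homog ->
          exists c : 'I_h -> K, I (f - \sum_(t < h) c t *: tnth s t) &
        forall c : 'I_h -> K, I (\sum_(t < h) c t *: tnth s t) -> forall t, c t = 0].

Definition isolated_peak I (j : nat) :=
  (1 <= j)%N /\
  exists a b c, [/\ HF_is I j.-1 a, HF_is I j b, HF_is I j.+1 c,
                    (a < b)%N & (c < b)%N].

Definition ideal_gen (S : {mpoly K[n]} -> Prop) : {mpoly K[n]} -> Prop :=
  fun f => exists s : seq ({mpoly K[n]} * {mpoly K[n]}),
    (forall x, x \in s -> S x.2) /\ f = \sum_(x <- s) x.1 * x.2.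

End Defs.

(* Tensor product: K[x_1..x_m]/I' (x) K[y_1..y_n]/I'' = K[x,y]/(I' + I'')
   where the variables of K[x,y] are indexed by 'I_(m+n) (x = lshift,
   y = rshift). *)
Definition ext_left (K : fieldType) (m n : nat) (p : {mpoly K[m]}) : {mpoly K[m + n]} :=
  p \mPo [tuple 'X_(lshift n i) | i < m].
Definition ext_right (K : fieldType) (m n : nat) (q : {mpoly K[n]}) : {mpoly K[m + n]} :=
  q \mPo [tuple 'X_(rshift m j) | j < n].

Definition tensor_ideal (K : fieldType) (m n : nat)
    (I' : {mpoly K[m]} -> Prop) (I'' : {mpoly K[n]} -> Prop) : {mpoly K[m + n]} -> Prop :=
  ideal_gen (fun f => (exists2 p, I' p & f = ext_left n p)
                   \/ (exists2 q, I'' q & f = ext_right m q)).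

(* Main.v *)
Require Import Defs.
From HB Require Import structures.
From mathcomp Require Import all_boot all_order all_algebra.
From mathcomp Require Import mpoly ssrcomplements.
From mathcomp Require Import ring.
From Stdlib Require Import Classical ClassicalEpsilon.
Set Implicit Arguments. Unset Strict Implicit. Unset Printing Implicit Defensive.
Import Order.TTheory GRing.Theory.
Local Open Scope ring_scope.

Section Sep.
Variables (K : fieldType) (n : nat).

Definition subsp (W : {mpoly K[n]} -> Prop) :=
  [/\ W 0, (forall p q, W p -> W q -> W (p + q)) & (forall c p, W p -> W (c *: p))].

Lemma msize_homog d (p : {mpoly K[n]}) : p \is d.-homog -> (msize p <= d.+1)%N.
Proof.
move=> /dhomogP hp; rewrite msizeE big_seq_cond.
by elim/big_rec: _ => // m x /andP[/hp -> _] hx; rewrite geq_max leqnn.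
Qed.

Local Notation BT d := ('X_{1..n < d.+1}).

Lemma sep d W (Ws : subsp W) (Wh : forall p, W p -> W (pihomog mdeg d p))
  v (vh : v \is d.-homog) (nv : ~ W v) :
  exists alpha : {mpoly K[n]} -> K,
    [/\ forall c p q, alpha (c *: p + q) = c * alpha p + alpha q,
        forall w, W w -> alpha w = 0 & alpha v != 0].
Proof.
case: Ws => W0 WD WZ.
pose k := #|{: BT d}|.
pose sigma (c : 'rV[K]_k) : {mpoly K[n]} :=
  \sum_(t < k) c 0 t *: 'X_[val (enum_val t : BT d)].
pose coords (p : {mpoly K[n]}) : 'rV[K]_k :=
  \row_(t < k) (pihomog mdeg d p)@_(val (enum_val t : BT d)).
have sigmaL a c c' : sigma (a *: c + c') = a *: sigma c + sigma c'.
  rewrite /sigma scaler_sumr -big_split /=; apply: eq_bigr => t _.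
  by rewrite !mxE scalerDl scalerA.
have sigma0 : sigma 0 = 0.
  by rewrite /sigma big1 // => t _; rewrite mxE scale0r.
have sc p : sigma (coords p) = pihomog mdeg d p.
  rewrite [RHS](@mpolywE _ _ d.+1); last by apply: msize_homog; apply: pihomogP.
  rewrite /sigma (big_enum_val (fun M : BT d => (pihomog mdeg d p)@_(val M) *: 'X_[val M])) /=.
  by apply: eq_bigr => t _; rewrite mxE.
pose Wc c := W (sigma c).
have WcD a c c' : Wc c -> Wc c' -> Wc (a *: c + c').
  by rewrite /Wc sigmaL => h1 h2; apply: WD => //; apply: WZ.
have Wc0 : Wc 0 by rewrite /Wc sigma0.
have WcA c c' : Wc c -> Wc c' -> Wc (c + c').
  by move=> h1 h2; rewrite -[c]scale1r; apply: WcD.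
have WcZ a c : Wc c -> Wc (a *: c).
  by move=> h1; rewrite -[_ *: _]addr0; apply: WcD.
pose valid (A : 'M[K]_k) := forall u : 'rV_k, (u <= A)%MS -> Wc u.
have step t : forall A, valid A -> (k - \rank A <= t)%N ->
    exists A', valid A' /\ forall u, Wc u -> (u <= A')%MS.
  elim: t => [|t IH] A vA hA.
    exists A; split => // u _; apply: submx_full.
    by rewrite /row_full eqn_leq rank_leq_col -subn_eq0 -leqn0.
  case: (classic (forall u, Wc u -> (u <= A)%MS)) => [H|]; first by exists A.
  move=> /not_all_ex_not [w Hw].
  have Ww : Wc w := not_imply_elim _ _ Hw.
  have nwA : ~~ (w <= A)%MS by apply/negP; exact: (not_imply_elim2 _ _ Hw).
  apply: (IH (A + w)%MS).
    move=> u /sub_addsmxP [[D1 D2] /= ->].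
    have /sub_rVP [a ->] : (D2 *m w <= w)%MS by apply: submxMl.
    by apply: WcA; [apply: vA; apply: submxMl | apply: WcZ].
  have : (A < A + w)%MS.
    rewrite ltmxE addsmxSl /=; apply/negP => h.
    by move: nwA; rewrite (submx_trans (addsmxSr A w) h).
  rewrite ltmxErank addsmxSl /= => hr.
  rewrite -ltnS (leq_trans _ hA) // ltn_sub2l //.
    by apply: (leq_trans hr); apply: rank_leq_col.
have [A [vA HA]] : exists A', valid A' /\ forall u, Wc u -> (u <= A')%MS.
  apply: (step k 0) => [u|]; last by rewrite leq_subr.
  by rewrite submx0 => /eqP ->.
have nvA : ~~ (coords v <= A)%MS.
  by apply/negP => /vA; rewrite /Wc sc pihomog_dE.
have [j hj] : exists j, (coords v *m cokermx A) 0 j != 0.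
  apply: NNPP => hn; move: nvA; rewrite submxE; case/negP; apply/eqP/rowP => j.
  rewrite [RHS]mxE; apply: NNPP => hj; apply: hn; exists j; by apply/eqP.
have coordsL c p q : coords (c *: p + q) = c *: coords p + coords q.
  by apply/rowP => t; rewrite !mxE linearP /= mcoeffD mcoeffZ.
exists (fun p => (coords p *m cokermx A) 0 j); split => //.
- by move=> c p q; rewrite coordsL mulmxDl -scalemxAl !mxE.
- move=> w Ww; have : (coords w <= A)%MS by apply: HA; rewrite /Wc sc; apply: Wh.
  by rewrite submxE => /eqP ->; rewrite mxE.
Qed.
End Sep.


Section IdealFacts.
Variables (K : fieldType) (n : nat) (I : {mpoly K[n]} -> Prop).
Hypothesis Iid : is_ideal I.

Lemma id0 : I 0. Proof. by case: Iid. Qed.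
Lemma idD p q : I p -> I q -> I (p + q). Proof. by case: Iid => _ h _; apply: h. Qed.
Lemma idMl r p : I p -> I (r * p). Proof. by case: Iid => _ _ h; apply: h. Qed.
Lemma idMr r p : I p -> I (p * r). Proof. by rewrite mulrC; apply: idMl. Qed.
Lemma idZ c p : I p -> I (c *: p). Proof. by rewrite -mul_mpolyC; apply: idMl. Qed.
Lemma idN p : I p -> I (- p). Proof. by rewrite -scaleN1r; apply: idZ. Qed.
Lemma idB p q : I p -> I q -> I (p - q). Proof. by move=> hp hq; apply: idD => //; apply: idN. Qed.
Lemma id_sum (T : finType) (F : T -> {mpoly K[n]}) : (forall t, I (F t)) -> I (\sum_t F t).
Proof. by move=> h; apply: (big_ind I id0 idD) => t _; apply: h. Qed.
Lemma id_eq p q : I p -> p = q -> I q. Proof. by move=> h <-. Qed.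
End IdealFacts.

Section Lin.
Variables (K : fieldType) (n : nat).
Implicit Types (p q l : {mpoly K[n]}).

Lemma dhomog_sum d (T : finType) (F : T -> {mpoly K[n]}) :
  (forall t, F t \is d.-homog) -> \sum_t F t \is d.-homog.
Proof.
move=> h; apply: (big_ind (fun p => p \is d.-homog)) => //; first exact: dhomog0.
by move=> x y hx hy; apply: dhomogD.
Qed.

Lemma pihomog_mull l q d : l \is 1.-homog ->
  pihomog mdeg d.+1 (l * q) = l * pihomog mdeg d q.
Proof.
move=> lh; elim/mpolyind: q => [|c m p _ _ IH]; first by rewrite mulr0 !linear0 mulr0.
rewrite mulrDr !linearD /= IH mulrDr; congr (_ + _).
rewrite -scalerAr !linearZ /= -scalerAr; congr (_ *: _).
have hm : l * 'X_[m] \is (1 + mdeg m)%N.-homog by apply: dhomogM => //; rewrite dhomogX.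
rewrite pihomogX; case: eqP => [<-|ne].
  by rewrite pihomog_dE.
rewrite mulr0 (pihomog_ne0 _ hm) // add1n eqSS; exact/eqP.
Qed.

Definition comb h (s : h.-tuple {mpoly K[n]}) (c : 'rV[K]_h) :=
  \sum_(t < h) c 0 t *: tnth s t.

Lemma comb_mul a b (s : b.-tuple {mpoly K[n]}) (v : 'rV[K]_a) (M : 'M[K]_(a, b)) :
  \sum_(t < a) v 0 t *: comb s (row t M) = comb s (v *m M).
Proof.
rewrite /comb; under eq_bigr => t _ do rewrite scaler_sumr.
rewrite exchange_big /=; apply: eq_bigr => u _; rewrite !mxE scaler_suml.
by apply: eq_bigr => t _; rewrite !mxE scalerA.
Qed.

Lemma choose_coefs I k h (s : h.-tuple {mpoly K[n]}) :
  (forall f, f \is k.-homog -> exists c : 'I_h -> K, I (f - \sum_(t < h) c t *: tnth s t)) ->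
  forall f, f \is k.-homog -> exists c : 'rV[K]_h, I (f - comb s c).
Proof.
move=> H f hf; have [c hc] := H f hf; exists (\row_t c t).
by rewrite /comb; under eq_bigr => t _ do rewrite mxE.
Qed.

Lemma comb_indep I h (s : h.-tuple {mpoly K[n]}) :
  (forall c : 'I_h -> K, I (\sum_(t < h) c t *: tnth s t) -> forall t, c t = 0) ->
  forall c : 'rV[K]_h, I (comb s c) -> c = 0.
Proof.
move=> H c hc; apply/rowP => t; rewrite mxE; exact: (H (fun t => c 0 t)).
Qed.

Lemma scalerBr_sum h (c : 'I_h -> K) (F G : 'I_h -> {mpoly K[n]}) :
  \sum_t c t *: (F t - G t) = \sum_t c t *: F t - \sum_t c t *: G t.
Proof. by rewrite -sumrB; apply: eq_bigr => t _; rewrite scalerBr. Qed.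

End Lin.

Section Peak.
Variables (K : fieldType) (n : nat) (I : {mpoly K[n]} -> Prop).
Hypothesis Iid : is_ideal I.

Lemma fun_choice (A : finType) (B : Type) (P : A -> B -> Prop) :
  (forall a, exists b, P a b) -> exists f : A -> B, forall a, P a (f a).
Proof.
move=> H; exists (fun a => proj1_sig (constructive_indefinite_description _ (H a))).
by move=> a; case: (constructive_indefinite_description _ _).
Qed.

Lemma not_inj_peak l (lh : l \is 1.-homog) j b c :
  HF_is I j b -> HF_is I j.+1 c -> (c < b)%N ->
  exists g, [/\ g \is j.-homog, ~ I g & I (l * g)].
Proof.
move=> [s [sh sspan sind]] [s' [sh' sspan' sind']] cb.
have sspanr := choose_coefs sspan'; have sindr := comb_indep sind.
have [cf hcf] : exists cf : 'I_b -> 'rV[K]_c, forall t, I (l * tnth s t - comb s' (cf t)).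
  apply: (fun_choice (P := fun t x => I (l * tnth s t - comb s' x))) => t; apply: sspanr.
  by rewrite -add1n; apply: dhomogM.
have [M rowM] : exists M : 'M[K]_(b, c), forall t, row t M = cf t.
  by exists (\matrix_(t, u) cf t 0 u) => t; apply/rowP => u; rewrite !mxE.
have kn0 : kermx M != 0.
  rewrite -mxrank_eq0 mxrank_ker subn_eq0 -ltnNge.
  exact: leq_ltn_trans (rank_leq_col M) cb.
have [i hi] : exists i, row i (kermx M) != 0.
  apply: NNPP => hn; move/negP: kn0; apply; apply/eqP/row_matrixP => i.
  rewrite row0; apply: NNPP => h; apply: hn; exists i; exact/eqP.
pose v := row i (kermx M).
have vM : v *m M = 0 by rewrite /v -row_mul mulmx_ker row0.
exists (comb s v); split.
- by apply: dhomog_sum => t; apply: dhomogZ.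
- by move/sindr => h; move: hi; rewrite -/v h eqxx.
- apply: (id_eq (p := (\sum_t v 0 t *: (l * tnth s t - comb s' (cf t)) + comb s' (v *m M)))).
    rewrite vM; apply: idD => //; last first.
      by rewrite /comb big1 => [|t _]; [exact: id0 | rewrite mxE scale0r].
    by apply: id_sum => // t; apply: idZ.
  have -> : comb s' (v *m M) = \sum_t v 0 t *: comb s' (cf t).
    by rewrite -comb_mul; apply: eq_bigr => t _; rewrite rowM.
  rewrite -big_split /= /comb mulr_sumr; apply: eq_bigr => t _.
  by rewrite scalerBr subrK scalerAr.
Qed.

Lemma not_surj_peak l (lh : l \is 1.-homog) j a b : (1 <= j)%N ->
  HF_is I j.-1 a -> HF_is I j b -> (a < b)%N ->
  exists2 g, g \is j.-homog & forall f, f \is j.-1.-homog -> ~ I (g - l * f).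
Proof.
move=> j1 [s [sh sspan sind]] [s' [sh' sspan' sind']] ab.
have sspanr := choose_coefs sspan; have sspanr' := choose_coefs sspan'.
have sindr' := comb_indep sind'.
have [cf hcf] : exists cf : 'I_a -> 'rV[K]_b, forall t, I (l * tnth s t - comb s' (cf t)).
  apply: (fun_choice (P := fun t x => I (l * tnth s t - comb s' x))) => t; apply: sspanr'.
  by rewrite -(prednK j1) -add1n; apply: dhomogM.
have [N rowN] : exists N : 'M[K]_(a, b), forall t, row t N = cf t.
  by exists (\matrix_(t, u) cf t 0 u) => t; apply/rowP => u; rewrite !mxE.
have [w hw] : exists w : 'rV[K]_b, ~~ (w <= N)%MS.
  apply: NNPP => hn.
  have : (1%:M <= N)%MS.
    apply/row_subP => i; apply: NNPP => h; apply: hn; exists (row i 1%:M); exact/negP.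
  move/mxrankS; rewrite mxrank1 => h.
  by move: (leq_trans h (rank_leq_row N)); rewrite leqNgt ab.
exists (comb s' w).
  by apply: dhomog_sum => t; apply: dhomogZ.
move=> f hf hI.
have [cv hcv] := sspanr f hf.
have : w = cv *m N.
  apply/eqP; rewrite -subr_eq0; apply/eqP/sindr'.
  apply: (id_eq (p := ((comb s' w - l * f) + l * (f - comb s cv)
      + \sum_t cv 0 t *: (l * tnth s t - comb s' (cf t))))).
    apply: idD => //; last by apply: id_sum => // t; apply: idZ.
    by apply: idD => //; apply: idMl.
  have -> : comb s' (w - cv *m N) = comb s' w - \sum_t cv 0 t *: comb s' (cf t).
    have -> : \sum_t cv 0 t *: comb s' (cf t) = comb s' (cv *m N).
      by rewrite -comb_mul; apply: eq_bigr => t _; rewrite rowN.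
    by rewrite /comb -sumrB; apply: eq_bigr => u _; rewrite !mxE scalerBl.
  rewrite scalerBr_sum.
  rewrite mulrBr /comb mulr_sumr.
  have -> : \sum_i l * (cv 0 i *: tnth s i) = \sum_t cv 0 t *: (l * tnth s t).
    by apply: eq_bigr => t _; rewrite scalerAr.
  by ring.
by move=> e; move: hw; rewrite e submxMl.
Qed.
End Peak.


Section Tensor.
Variables (K : fieldType) (m n : nat).

Definition mL (a : 'X_{1..m}) : 'X_{1..m + n} :=
  [multinom (match split k with inl i => a i | inr _ => 0%N end) | k < m + n].
Definition mR (b : 'X_{1..n}) : 'X_{1..m + n} :=
  [multinom (match split k with inl _ => 0%N | inr j => b j end) | k < m + n].
Definition mlo (M : 'X_{1..m + n}) : 'X_{1..m} := [multinom M (lshift n i) | i < m].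
Definition mhi (M : 'X_{1..m + n}) : 'X_{1..n} := [multinom M (rshift m j) | j < n].

Lemma split_l (i : 'I_m) : split (lshift n i) = inl i.
Proof. exact: (unsplitK (inl _ i)). Qed.
Lemma split_r (j : 'I_n) : split (rshift m j) = inr j.
Proof. exact: (unsplitK (inr _ j)). Qed.

Lemma mL_l a i : mL a (lshift n i) = a i. Proof. by rewrite mnmE split_l. Qed.
Lemma mL_r a j : mL a (rshift m j) = 0%N. Proof. by rewrite mnmE split_r. Qed.
Lemma mR_l b i : mR b (lshift n i) = 0%N. Proof. by rewrite mnmE split_l. Qed.
Lemma mR_r b j : mR b (rshift m j) = b j. Proof. by rewrite mnmE split_r. Qed.

Lemma mlo_mLD a M : mlo (mL a + M) = (a + mlo M)%MM.
Proof. by apply/mnmP => i; rewrite !mnmE split_l. Qed.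
Lemma mhi_mLD a M : mhi (mL a + M) = mhi M.
Proof. by apply/mnmP => i; rewrite !mnmE split_r. Qed.
Lemma mlo_mRD b M : mlo (mR b + M) = mlo M.
Proof. by apply/mnmP => i; rewrite !mnmE split_l. Qed.
Lemma mhi_mRD b M : mhi (mR b + M) = (b + mhi M)%MM.
Proof. by apply/mnmP => i; rewrite !mnmE split_r. Qed.
Lemma mlo0 : mlo 0%MM = 0%MM. Proof. by apply/mnmP => i; rewrite !mnmE. Qed.
Lemma mhi0 : mhi 0%MM = 0%MM. Proof. by apply/mnmP => i; rewrite !mnmE. Qed.

Lemma mdeg_mL a : mdeg (mL a) = mdeg a.
Proof.
rewrite !mdegE big_split_ord /=.
rewrite (eq_bigr (fun i => a i)) => [|i _]; last by rewrite mL_l.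
by rewrite [X in (_ + X)%N]big1 ?addn0 // => j _; rewrite mL_r.
Qed.
Lemma mdeg_mR b : mdeg (mR b) = mdeg b.
Proof.
rewrite !mdegE big_split_ord /=.
rewrite big1 ?add0n => [|i _]; last by rewrite mR_l.
by apply: eq_bigr => j _; rewrite mR_r.
Qed.

Lemma ext_leftX a : ext_left n ('X_[a] : {mpoly K[m]}) = 'X_[mL a].
Proof.
rewrite /ext_left comp_mpolyX [RHS]mpolyXE_id big_split_ord /=.
rewrite [X in _ = _ * X]big1 ?mulr1 => [|j _]; last by rewrite mL_r expr0.
by apply: eq_bigr => i _; rewrite tnth_mktuple mL_l.
Qed.
Lemma ext_rightX b : ext_right m ('X_[b] : {mpoly K[n]}) = 'X_[mR b].
Proof.
rewrite /ext_right comp_mpolyX [RHS]mpolyXE_id big_split_ord /=.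
rewrite [X in _ = X * _]big1 ?mul1r => [|j _]; last by rewrite mR_l expr0.
by apply: eq_bigr => i _; rewrite tnth_mktuple mR_r.
Qed.

Lemma ext_left_homog d (p : {mpoly K[m]}) : p \is d.-homog -> ext_left n p \is d.-homog.
Proof.
move=> /dhomogP hp; rewrite /ext_left comp_mpolyEX big_seq.
apply: (big_ind (fun p => p \is d.-homog)); first exact: dhomog0.
  by move=> x y; apply: dhomogD.
move=> M /hp hM; apply: dhomogZ.
have := ext_leftX M; rewrite /ext_left => ->; rewrite dhomogX; apply/eqP; rewrite -hM; exact: mdeg_mL.
Qed.
Lemma ext_right_homog d (p : {mpoly K[n]}) : p \is d.-homog -> ext_right m p \is d.-homog.
Proof.
move=> /dhomogP hp; rewrite /ext_right comp_mpolyEX big_seq.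
apply: (big_ind (fun p => p \is d.-homog)); first exact: dhomog0.
  by move=> x y; apply: dhomogD.
move=> M /hp hM; apply: dhomogZ.
have := ext_rightX M; rewrite /ext_right => ->; rewrite dhomogX; apply/eqP; rewrite -hM; exact: mdeg_mR.
Qed.

End Tensor.

Section Phi.
Variables (K : fieldType) (m n : nat).
Variables (alpha : {mpoly K[m]} -> K) (beta : {mpoly K[n]} -> K).

Definition Phi (P : {mpoly K[m + n]}) : K :=
  \sum_(M <- msupp P) P@_M * (alpha 'X_[mlo M] * beta 'X_[mhi M]).

Lemma PhiwE k P : (msize P <= k)%N ->
  Phi P = \sum_(M : 'X_{1..(m + n) < k}) P@_M * (alpha 'X_[mlo M] * beta 'X_[mhi M]).
Proof.
move=> lt_pk; pose I : subFinType _ := 'X_{1..(m + n) < k}.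
rewrite /Phi (big_mksub I) //=; first last.
  by move=> x /msize_mdeg_lt /leq_trans; apply.
  by rewrite msupp_uniq.
by rewrite big_rmcond //= => i; move/memN_msupp_eq0 ->; rewrite mul0r.
Qed.

Lemma PhiL c P Q : Phi (c *: P + Q) = c * Phi P + Phi Q.
Proof.
pose k := maxn (msize P) (maxn (msize Q) (msize (c *: P + Q))).
have h1 : (msize P <= k)%N by rewrite leq_maxl.
have h2 : (msize Q <= k)%N by rewrite /k (leq_trans (leq_maxl _ _) (leq_maxr _ _)).
have h3 : (msize (c *: P + Q) <= k)%N by rewrite /k (leq_trans (leq_maxr _ _) (leq_maxr _ _)).
rewrite (PhiwE h1) (PhiwE h2) (PhiwE h3).
rewrite mulr_sumr -big_split /=; apply: eq_bigr => M _.
by rewrite mcoeffD mcoeffZ; ring.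
Qed.

Lemma Phi0 : Phi 0 = 0.
Proof. by rewrite /Phi -mpolyC0 msupp0 big_nil. Qed.

Lemma PhiD P Q : Phi (P + Q) = Phi P + Phi Q.
Proof. by rewrite -[P]scale1r PhiL mul1r scale1r. Qed.
Lemma PhiZ c P : Phi (c *: P) = c * Phi P.
Proof. by rewrite -[_ *: _]addr0 PhiL Phi0 addr0. Qed.

Lemma PhiX M : Phi 'X_[M] = alpha 'X_[mlo M] * beta 'X_[mhi M].
Proof. by rewrite /Phi msuppX big_seq1 mcoeffX eqxx mul1r. Qed.

Lemma Phi_seqsum (T : Type) (s : seq T) F : Phi (\sum_(x <- s) F x) = \sum_(x <- s) Phi (F x).
Proof. by elim: s => [|x s IH]; rewrite ?big_nil ?Phi0 // !big_cons PhiD IH. Qed.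

End Phi.

Definition islin (K : fieldType) (k : nat) (f : {mpoly K[k]} -> K) :=
  forall c p q, f (c *: p + q) = c * f p + f q.

Section PhiProps.
Variables (K : fieldType) (m n : nat).

Lemma islin0 k (f : {mpoly K[k]} -> K) : islin f -> f 0 = 0.
Proof. by move=> h; have := h 1 0 0; rewrite scale1r addr0 mul1r => /(congr1 (fun x => x - f 0)); rewrite subrr addrK. Qed.

Lemma islin_mul k (f : {mpoly K[k]} -> K) u : islin f -> islin (fun p => f (u * p)).
Proof. by move=> h c p q; rewrite mulrDr -scalerAr h. Qed.

Lemma Phi_eq0l (alpha : {mpoly K[m]} -> K) (beta : {mpoly K[n]} -> K) P :
  (forall p, alpha p = 0) -> Phi alpha beta P = 0.
Proof. by move=> h; rewrite /Phi big1 // => M _; rewrite h mul0r mulr0. Qed.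
Lemma Phi_eq0r (alpha : {mpoly K[m]} -> K) (beta : {mpoly K[n]} -> K) P :
  (forall p, beta p = 0) -> Phi alpha beta P = 0.
Proof. by move=> h; rewrite /Phi big1 // => M _; rewrite h mulr0 mulr0. Qed.

Lemma Phi_left (alpha : {mpoly K[m]} -> K) (beta : {mpoly K[n]} -> K) u P :
  islin alpha ->
  Phi alpha beta (ext_left n u * P) = Phi (fun p => alpha (u * p)) beta P.
Proof.
move=> la; elim/mpolyind: P => [|c M P _ _ IH]; first by rewrite mulr0 !Phi0.
rewrite mulrDr -scalerAr !PhiL IH; congr (_ * _ + _).
rewrite PhiX; clear IH; elim/mpolyind: u => [|d a u _ _ IHu].
  by rewrite /ext_left linear0 mul0r Phi0 mul0r islin0 // mul0r.
rewrite /ext_left linearD linearZ /= -/(ext_left n _) -/(ext_left n u).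
rewrite mulrDl -scalerAl PhiL IHu mulrDl -scalerAl la mulrDl; congr (_ + _).
have := ext_leftX K n a; rewrite /ext_left => ->.
by rewrite -mpolyXD PhiX mlo_mLD mhi_mLD mpolyXD mulrA.
Qed.

Lemma Phi_right (alpha : {mpoly K[m]} -> K) (beta : {mpoly K[n]} -> K) v P :
  islin beta ->
  Phi alpha beta (ext_right m v * P) = Phi alpha (fun p => beta (v * p)) P.
Proof.
move=> lb; elim/mpolyind: P => [|c M P _ _ IH]; first by rewrite mulr0 !Phi0.
rewrite mulrDr -scalerAr !PhiL IH; congr (_ * _ + _).
rewrite PhiX; clear IH; elim/mpolyind: v => [|d b v _ _ IHv].
  by rewrite /ext_right linear0 mul0r Phi0 mul0r islin0 // mulr0.
rewrite /ext_right linearD linearZ /= -/(ext_right m _) -/(ext_right m v).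
rewrite mulrDl -scalerAl PhiL IHv mulrDl -scalerAl lb mulrDr; congr (_ + _).
have := ext_rightX K m b; rewrite /ext_right => ->.
by rewrite -mpolyXD PhiX mlo_mRD mhi_mRD mpolyXD; ring.
Qed.

End PhiProps.


Lemma lin_expand (K : fieldType) (k : nat) (l : {mpoly K[k]}) : l \is 1.-homog ->
  l = \sum_(t < k) l@_U_(t) *: 'X_t.
Proof.
move=> lh; apply/mpolyP => M; rewrite raddf_sum /=.
under eq_bigr => t _ do rewrite mcoeffZ mcoeffX.
case: (boolP (mdeg M == 1%N)) => [/mdeg1P [t /eqP ->]|hM].
  rewrite (bigD1 t) //= eqxx mulr1 big1 ?addr0 // => u hu.
  by rewrite eq_mnm1 (negbTE hu) mulr0.
rewrite (dhomog_nemf_coeff lh) // big1 // => u _.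
case: eqP => [e|]; last by rewrite mulr0.
by move: hM; rewrite -e mdeg1.
Qed.


Section Final.
Variables (K : fieldType) (m n : nat).

Lemma lin_decomp (l : {mpoly K[m + n]}) : l \is 1.-homog ->
  exists l1 l2, [/\ l1 \is 1.-homog, l2 \is 1.-homog &
    l = ext_left n l1 + ext_right m l2].
Proof.
move=> lh.
exists (\sum_(i < m) l@_U_(lshift n i) *: 'X_i).
exists (\sum_(j < n) l@_U_(rshift m j) *: 'X_j).
split.
- by apply: dhomog_sum => i; apply: dhomogZ; rewrite dhomogX; apply/eqP; exact: mdeg1.
- by apply: dhomog_sum => i; apply: dhomogZ; rewrite dhomogX; apply/eqP; exact: mdeg1.
rewrite {1}(lin_expand lh) big_split_ord /= /ext_left /ext_right !raddf_sum /=.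
congr (_ + _); apply: eq_bigr => i _; rewrite linearZ /= comp_mpolyXU -tnth_nth tnth_mktuple //.
Qed.

Lemma PhiB (alpha : {mpoly K[m]} -> K) (beta : {mpoly K[n]} -> K) P Q :
  Phi alpha beta (P - Q) = Phi alpha beta P - Phi alpha beta Q.
Proof. by rewrite addrC -scaleN1r PhiL mulN1r addrC. Qed.

Lemma Phi_tensor (alpha : {mpoly K[m]} -> K) (beta : {mpoly K[n]} -> K) u v :
  islin alpha -> islin beta ->
  Phi alpha beta (ext_left n u * ext_right m v) = alpha u * beta v.
Proof.
move=> la lb; rewrite Phi_left // -[ext_right m v]mulr1 Phi_right //.
by rewrite -mpolyX0 PhiX mlo0 mhi0 !mpolyX0 !mulr1.
Qed.

Lemma Phi_vanish (I' : {mpoly K[m]} -> Prop) (I'' : {mpoly K[n]} -> Prop)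
   (alpha : {mpoly K[m]} -> K) (beta : {mpoly K[n]} -> K) F :
  is_ideal I' -> is_ideal I'' -> islin alpha -> islin beta ->
  (forall p, I' p -> alpha p = 0) -> (forall q, I'' q -> beta q = 0) ->
  tensor_ideal I' I'' F -> Phi alpha beta F = 0.
Proof.
move=> i1 i2 la lb a0 b0 [s [hs ->]]; rewrite Phi_seqsum big_seq big1 // => x /hs.
case=> [[p hp ->]|[q hq ->]]; rewrite mulrC.
  rewrite Phi_left // Phi_eq0l // => r; exact: a0 (idMr i1 r hp).
rewrite Phi_right // Phi_eq0r // => r; exact: b0 (idMr i2 r hq).
Qed.

Lemma tensor_gen (I' : {mpoly K[m]} -> Prop) (I'' : {mpoly K[n]} -> Prop) r p q :
  I' p -> I'' q ->
  tensor_ideal I' I'' (r * ext_left n p) /\ tensor_ideal I' I'' (r * ext_right m q).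
Proof.
move=> hp hq; split.
  exists [:: (r, ext_left n p)]; split; last by rewrite big_seq1.
  by move=> x; rewrite inE => /eqP -> /=; left; exists p.
exists [:: (r, ext_right m q)]; split; last by rewrite big_seq1.
by move=> x; rewrite inE => /eqP -> /=; right; exists q.
Qed.

Lemma tensorD (I' : {mpoly K[m]} -> Prop) (I'' : {mpoly K[n]} -> Prop) F G :
  tensor_ideal I' I'' F -> tensor_ideal I' I'' G -> tensor_ideal I' I'' (F + G).
Proof.
move=> [s [hs ->]] [t [ht ->]]; exists (s ++ t); split; last by rewrite big_cat.
by move=> x; rewrite mem_cat => /orP [/hs|/ht].
Qed.

End Final.

Section Seps.
Variables (K : fieldType) (k : nat) (I : {mpoly K[k]} -> Prop).
Hypothesis Ih : is_homog_ideal I.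

Lemma inj_sep d f : f \is d.-homog -> ~ I f ->
  exists al : {mpoly K[k]} -> K, [/\ islin al, forall p, I p -> al p = 0 & al f != 0].
Proof.
case: Ih => Ii Ip fh nf.
have [al [la a0 af]] := sep (W := I) (d := d)
  (And3 (id0 Ii) (idD Ii) (fun c p => idZ Ii c (p := p))) (fun p hp => Ip p d hp) fh nf.
by exists al.
Qed.

Lemma surj_sep l d g : l \is 1.-homog -> g \is d.+1.-homog ->
  (forall f, f \is d.-homog -> ~ I (g - l * f)) ->
  exists al : {mpoly K[k]} -> K,
    [/\ islin al, forall p, I p -> al p = 0, forall q, al (l * q) = 0 & al g != 0].
Proof.
case: Ih => Ii Ip lh gh ng.
pose W p := exists q, I (p - l * q).
have Ws : subsp W.
  split.
  - by exists 0; rewrite mulr0 subr0; apply: id0.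
  - move=> p1 p2 [q1 h1] [q2 h2]; exists (q1 + q2).
    by apply: (id_eq (idD Ii h1 h2)); ring.
  - move=> c p [q h]; exists (c *: q).
    by apply: (id_eq (idZ Ii c h)); rewrite scalerBr scalerAr.
have Wh p : W p -> W (pihomog mdeg d.+1 p).
  case=> q hq; exists (pihomog mdeg d q).
  by have := Ip _ d.+1 hq; rewrite linearB /= pihomog_mull.
have nW : ~ W g.
  case=> q hq; apply: (ng (pihomog mdeg d q)); first exact: pihomogP.
  by have := Ip _ d.+1 hq; rewrite linearB /= pihomog_mull // pihomog_dE.
have [al [la a0 ag]] := sep Ws Wh gh nW.
exists al; split => //.
- by move=> p hp; apply: a0; exists 0; rewrite mulr0 subr0.
- by move=> q; apply: a0; exists q; rewrite subrr; apply: id0.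
Qed.
End Seps.

Theorem theorem3p2 (K : fieldType) (m n : nat)
    (I' : {mpoly K[m]} -> Prop) (I'' : {mpoly K[n]} -> Prop) (i j : nat) :
  std_graded_artinian I' -> std_graded_artinian I'' ->
  fails_WLP_in_degree I' i -> isolated_peak I'' j ->
  ~ has_WLP (tensor_ideal I' I'') /\ fails_WLP_in_degree (tensor_ideal I' I'') (i + j).
Proof.
move=> [H1 _ _] [H2 _ _] fw [j1 [a [b [c [ha hb hc ab cb]]]]].
have i1 : is_ideal I' by case: H1.
have i2 : is_ideal I'' by case: H2.
suff hf : fails_WLP_in_degree (tensor_ideal I' I'') (i + j).
  by split => //; case=> l lh hl; exact: hf l lh (hl (i + j)).
move=> l lh; have [l1 [l2 [l1h l2h ->]]] := lin_decomp lh.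
have ninj : ~ mul_injective I' l1 i by move=> h; apply: (fw l1 l1h); left.
have nsurj : ~ mul_surjective I' l1 i by move=> h; apply: (fw l1 l1h); right.
case=> [inj|surj].
- have [f [fh fl nf]] : exists f, [/\ f \is i.-homog, I' (l1 * f) & ~ I' f].
    apply: NNPP => hn; apply: ninj => f fh hl; apply: NNPP => nf; by apply: hn; exists f; split.
  have [g [gh ng gl]] := not_inj_peak i2 l2h hb hc cb.
  have [al [la a0 af]] := inj_sep H1 fh nf.
  have [be [lb b0 bg]] := inj_sep H2 gh ng.
  have hF : ext_left n f * ext_right m g \is (i + j).-homog.
    by apply: dhomogM; [apply: ext_left_homog | apply: ext_right_homog].
  have hT : tensor_ideal I' I'' (ext_left n f * ext_right m g).
    apply: (inj _ hF).
    have -> : (ext_left n l1 + ext_right m l2) * (ext_left n f * ext_right m g) =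
        ext_right m g * ext_left n (l1 * f) + ext_left n f * ext_right m (l2 * g).
      by rewrite /ext_left /ext_right !rmorphM /=; ring.
    apply: tensorD; [exact: (tensor_gen (ext_right m g) fl gl).1
                    | exact: (tensor_gen (ext_left n f) fl gl).2].
  have := Phi_vanish i1 i2 la lb a0 b0 hT; rewrite Phi_tensor // => /eqP.
  by rewrite mulf_eq0 (negbTE af) (negbTE bg).
- have [g0 g0h ng0] : exists2 g, g \is i.+1.-homog &
      forall f, f \is i.-homog -> ~ I' (g - l1 * f).
    apply: NNPP => hn; apply: nsurj => g gh; apply: NNPP => hne; apply: hn.
    by exists g => // f fh hI; apply: hne; exists f.
  have [g' g'h ng'] := not_surj_peak i2 l2h j1 ha hb ab.
  have g'h' : g' \is (j.-1).+1.-homog by rewrite prednK.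
  have [al [la a0 al0 ag]] := surj_sep H1 l1h g0h ng0.
  have [be [lb b0 be0 bg]] := surj_sep H2 l2h g'h' ng'.
  have hG : ext_left n g0 * ext_right m g' \is (i + j).+1.-homog.
    rewrite -addSn; apply: dhomogM; [apply: ext_left_homog | apply: ext_right_homog] => //.
  have [F _ hT] := surj _ hG.
  have := Phi_vanish i1 i2 la lb a0 b0 hT.
  rewrite PhiB mulrDl PhiD Phi_tensor // Phi_left // Phi_right //.
  rewrite (Phi_eq0l _ _ al0) (Phi_eq0r _ _ be0) addr0 subr0 => /eqP.
  by rewrite mulf_eq0 (negbTE ag) (negbTE bg).
Qed.
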